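(* Let $L=\bigoplus_{i=0}^N L_i$ be a Jordan splitting with $N\ge2$, let $L'$ be the associated lattice with decomposition $L'=\bigoplus_{i=0}^{N-1}L'_i$, and let $M\in\{L,L'\}$ with its given decomposition $M=\bigoplus_i M_i$. Let $0\le i\le j\le N$ if $M=L$ and $0\le i\le j\le N-1$ if $M=L'$. Then for all $g\in G_M$ and $x\in M_j$ we have $g(x)^M_i\in\mathfrak{p}_E^{j-i}M_i$.
   Context: $F$ is a non-archimedean local field with residue characteristic $p$, ring of integers $\mathcal{O}_F$, uniformiser $\varpi_F$. Fix $\epsilon\in\{\pm1\}$ and $(E,\sigma)$ one of: $E=F$, $\sigma=\mathrm{id}$; $E$ a quadratic field extension of $F$ with $\sigma$ the nontrivial automorphism; $E=F\oplus F$ with $\sigma(x,y)=(y,x)$; $E$ the quaternion division algebra over $F$ with its standard involution. Assume $p\ne2$ if $E$ is a ramified quadratic extension, or if $E=F$ and $\epsilon=1$. $\mathcal{O}_E$ is the maximal $\mathcal{O}_F$-order; $\varpi_E$ is a uniformiser of $\mathcal{O}_E$ if $E/F$ is ramified or $E$ is quaternion, and $\varpi_E=\varpi_F$ otherwise; $\mathfrak{p}_E=\varpi_E\mathcal{O}_E$. $L$ is a finite-rank $\mathcal{O}_E$-lattice with a $(\sigma,\epsilon)$-Hermitian form $\langle\ ,\ \rangle:L\times L\to\mathcal{O}_E$, nondegenerate on $V=L\otimes_{\mathcal{O}_F}F$; $L^\vee=\{x\in V:\langle x,L\rangle\subseteq\mathcal{O}_E\}$. A Jordan splitting is an orthogonal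 decomposition $L=\bigoplus_{i=0}^N L_i$ with $L_i^\vee=\mathfrak{p}_E^{-i}L_i$. For $N\ge2$, $L'=\bigoplus_{i=0}^{N-1}L'_i$ where $L'_i=L_i$ for $i\ne N-2$ and $L'_{N-2}=L_{N-2}\oplus\mathfrak{p}_E^{-1}L_N$. For $x\in V$ and a decomposition $M=\bigoplus_i M_i$, $x^M_i\in M_i\otimes F$ denotes the components with $x=\sum_i x^M_i$. $G_V$ is the isometry group of $V$ and $G_M\subseteq G_V$ the stabiliser of $M$. *)

(* Defs.v *)
From HB Require Import structures.
From mathcomp Require Import all_boot all_order all_algebra all_field.
Set Implicit Arguments. Unset Strict Implicit. Unset Printing Implicit Defensive.
Import Order.TTheory GRing.Theory Num.Theory.
Local Open Scope ring_scope.

(* v : F -> int is only meaningful on nonzero elements; v 0 is junk.  *)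
Section LocalField.
Variable F : fieldType.
Variable v : F -> int.

(* "x = 0 or v x >= n", i.e. x lies in p_F^n *)
Definition vge (n : int) (x : F) : Prop := x = 0 \/ n <= v x.

Definition discrete_valuation : Prop :=
  [/\ (forall x y, x != 0 -> y != 0 -> v (x * y) = v x + v y),
      (forall x y, x != 0 -> y != 0 -> x + y != 0 -> Num.min (v x) (v y) <= v (x + y))
    & (forall n : int, exists x, x != 0 /\ v x = n)].

Definition OF (x : F) : Prop := vge 0 x.
Definition pF (x : F) : Prop := vge 1 x.

Definition complete_wrt_v : Prop :=
  forall u : nat -> F,
    (forall n : int, exists N, forall a b, (N <= a)%N -> (N <= b)%N -> vge n (u a - u b)) ->
    exists l, forall n : int, exists N, forall a, (N <= a)%N -> vge n (u a - l).

Definition finite_residue_field : Prop :=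
  exists s : seq F, (forall r, r \in s -> OF r) /\
    forall x, OF x -> exists2 r, r \in s & pF (x - r).

Definition nonarch_local_field : Prop :=
  [/\ discrete_valuation, complete_wrt_v & finite_residue_field].

Definition uniformiserF (w : F) : Prop := w != 0 /\ v w = 1.

Definition residue_char (p : nat) : Prop := prime p /\ pF (p%:R).
End LocalField.

Section Algebra.
Variable F : fieldType.
Variable E : falgType F.

Definition anti_involution (s : E -> E) : Prop :=
  [/\ (forall x y, s (x + y) = s x + s y),
      (forall x y, s (x * y) = s y * s x),
      (forall (c : F) x, s (c *: x) = c *: s x),
      s 1 = 1
    & (forall x, s (s x) = x)].

Definition ring_automorphism_over_F (s : E -> E) : Prop :=
  [/\ (forall x y, s (x + y) = s x + s y),
      (forall x y, s (x * y) = s x * s y),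
      (forall (c : F) x, s (c *: x) = c *: s x),
      s 1 = 1
    & bijective s].

Definition is_division_ring : Prop := forall x : E, x != 0 -> x \is a GRing.unit.
Definition is_commutative : Prop := forall x y : E, x * y = y * x.
Definition is_central : Prop :=
  forall x : E, (forall y : E, x * y = y * x) -> exists c : F, x = c%:A.

Definition standard_involution (s : E -> E) : Prop :=
  anti_involution s /\ forall x, exists c : F, x * s x = c%:A.

Definition split_with_swap (s : E -> E) : Prop :=
  exists phi : E -> F * F,
    [/\ bijective phi,
        (forall x y, phi (x + y) = phi x + phi y),
        (forall x y, phi (x * y) = phi x * phi y),
        (forall c : F, phi c%:A = (c, c))
      & (forall x, phi (s x) = ((phi x).2, (phi x).1))].

Inductive Ecase := CaseF | CaseQuadField | CaseSplit | CaseQuaternion.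

Definition admissible (c : Ecase) (s : E -> E) : Prop :=
  match c with
  | CaseF => \dim {:E} = 1%N /\ (forall x, s x = x)
  | CaseQuadField => [/\ \dim {:E} = 2%N, is_commutative, is_division_ring,
                         ring_automorphism_over_F s & exists x, s x != x]
  | CaseSplit => \dim {:E} = 2%N /\ split_with_swap s
  | CaseQuaternion => [/\ \dim {:E} = 4%N, is_division_ring, is_central
                         & standard_involution s]
  end.

Variable OFp : F -> Prop.

Definition OF_span (s : seq E) (x : E) : Prop :=
  exists a : 'I_(size s) -> F, (forall k, OFp (a k)) /\
    x = \sum_(k < size s) a k *: s`_k.

Definition is_order (Lam : E -> Prop) : Prop :=
  [/\ Lam 1,
      (forall x y, Lam x -> Lam y -> Lam (x - y) /\ Lam (x * y)),
      (forall (c : F) x, OFp c -> Lam x -> Lam (c *: x)),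
      (exists s : seq E, forall x, Lam x <-> OF_span s x)
    & (forall x : E, exists c : F, c != 0 /\ Lam (c *: x))].

Definition is_maximal_order (Lam : E -> Prop) : Prop :=
  is_order Lam /\
  forall Lam', is_order Lam' -> (forall x, Lam x -> Lam' x) -> forall x, Lam' x -> Lam x.

Variable OE : E -> Prop.

Definition OE_unit (x : E) : Prop := OE x /\ x \is a GRing.unit /\ OE x^-1.
Definition uniformiserE (w : E) : Prop :=
  OE w /\ forall x, (OE x /\ ~ OE_unit x) <-> (exists b, OE b /\ x = w * b).

Definition ramified (wF : F) : Prop := ~ uniformiserE wF%:A.

Definition pE_pow (wE : E) (k : int) (a : E) : Prop :=
  exists b, OE b /\ a = wE ^ k * b.
End Algebra.

Section Lattices.
Variable F : fieldType.
Variable E : falgType F.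
Variable V : lmodType E.
Variable OE : E -> Prop.

Definition ideal_mul (I : E -> Prop) (M : V -> Prop) (x : V) : Prop :=
  exists n (a : 'I_n -> E) (m : 'I_n -> V),
    [/\ forall l, I (a l), forall l, M (m l) & x = \sum_(l < n) a l *: m l].

Definition Fspan (M : V -> Prop) (x : V) : Prop :=
  exists n (c : 'I_n -> F) (m : 'I_n -> V),
    (forall l, M (m l)) /\ x = \sum_(l < n) (c l)%:A *: m l.

Definition OE_submodule (M : V -> Prop) : Prop :=
  [/\ M 0, (forall x y, M x -> M y -> M (x + y))
    & (forall a x, OE a -> M x -> M (a *: x))].

Definition fin_gen (M : V -> Prop) : Prop :=
  exists s : seq V, forall x, M x <->
    exists a : 'I_(size s) -> E, (forall k, OE (a k)) /\ x = \sum_(k < size s) a k *: s`_k.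

Definition full_lattice (M : V -> Prop) : Prop :=
  [/\ OE_submodule M, fin_gen M & forall x, Fspan M x].

Definition sigma_eps_hermitian (s : E -> E) (eps : F) (h : V -> V -> E) : Prop :=
  [/\ (forall x y z, h (x + y) z = h x z + h y z),
      (forall a x y, h (a *: x) y = a * h x y)
    & (forall x y, h x y = eps%:A * s (h y x))].

Definition nondegenerate_form (h : V -> V -> E) : Prop :=
  forall x, (forall y, h x y = 0) -> x = 0.

Definition dual_lattice (h : V -> V -> E) (M : V -> Prop) (x : V) : Prop :=
  Fspan M x /\ forall m, M m -> OE (h x m).

Definition dsum (Ms : nat -> V -> Prop) (K : nat) (x : V) : Prop :=
  exists y : nat -> V, (forall k, (k <= K)%N -> Ms k (y k)) /\ x = \sum_(k < K.+1) y k.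

Definition jordan_splitting (wE : E) (h : V -> V -> E) (L : V -> Prop)
    (Ls : nat -> V -> Prop) (N : nat) : Prop :=
  [/\ (forall i, (i <= N)%N -> OE_submodule (Ls i)),
      (forall x, L x <-> dsum Ls N x),
      (forall y : nat -> V, (forall k, (k <= N)%N -> Ls k (y k)) ->
          \sum_(k < N.+1) y k = 0 -> forall k, (k <= N)%N -> y k = 0),
      (forall i j x y, (i <= N)%N -> (j <= N)%N -> i != j -> Ls i x -> Ls j y -> h x y = 0)
    & (forall i, (i <= N)%N -> forall x,
          dual_lattice h (Ls i) x <-> ideal_mul (pE_pow OE wE (- (i%:Z))) (Ls i) x)].

Definition Lprime_parts (wE : E) (Ls : nat -> V -> Prop) (N : nat) (i : nat) : V -> Prop :=
  if i == (N - 2)%N then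
    fun x => exists a b, [/\ Ls (N - 2)%N a,
                             ideal_mul (pE_pow OE wE (-1)) (Ls N) b & x = a + b]
  else Ls i.

Definition is_isometry (h : V -> V -> E) (g : V -> V) : Prop :=
  [/\ (forall x y, g (x + y) = g x + g y),
      (forall a x, g (a *: x) = a *: g x),
      bijective g
    & (forall x y, h (g x) (g y) = h x y)].

Definition stabilises (g : V -> V) (M : V -> Prop) : Prop :=
  forall y, M y <-> exists x, M x /\ y = g x.
End Lattices.

(* Main.v *)
Require Import Defs.
From HB Require Import structures.
From mathcomp Require Import all_boot all_order all_algebra all_field.
From mathcomp Require Import zify.
From Stdlib Require Import Classical.
Import Order.TTheory GRing.Theory Num.Theory.
Local Open Scope ring_scope.

Set Implicit Arguments. Unset Strict Implicit. Unset Printing Implicit Defensive.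

Section Val.
Variables (F : fieldType) (v : F -> int).
Hypothesis vM : forall x y, x != 0 -> y != 0 -> v (x * y) = v x + v y.
Hypothesis vD : forall x y, x != 0 -> y != 0 -> x + y != 0 -> Num.min (v x) (v y) <= v (x + y).

Lemma v1 : v 1 = 0.
Proof.
have := vM (oner_neq0 F) (oner_neq0 F); rewrite mulr1 => H.
by apply: (@addrI _ (v 1)); rewrite addr0 -H.
Qed.

Lemma vN1 : v (-1) = 0.
Proof.
have n1 : (-1 : F) != 0 by rewrite oppr_eq0 oner_neq0.
have := vM n1 n1; rewrite mulrNN mulr1 v1 => H.
have : (v (-1)) *+ 2 == 0 by rewrite mulr2n -H.
by rewrite -mulr_natr mulf_eq0 orbF => /eqP.
Qed.

Lemma vN x : x != 0 -> v (- x) = v x.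
Proof.
move=> x0; rewrite -mulN1r vM ?vN1 ?add0r //.
by rewrite oppr_eq0 oner_neq0.
Qed.

Lemma vge_add n x y : vge v n x -> vge v n y -> vge v n (x + y).
Proof.
move=> [->|Hx]; first by rewrite add0r.
move=> [->|Hy]; first by rewrite addr0; right.
case: (eqVneq (x + y) 0) => [->|s0]; first by left.
case: (eqVneq x 0) => [x0|x0]; first by rewrite x0 add0r; right.
case: (eqVneq y 0) => [y0|y0]; first by rewrite y0 addr0; right.
right; apply: le_trans (vD x0 y0 s0).
by rewrite le_min Hx Hy.
Qed.

Lemma vge_opp n x : vge v n x -> vge v n (- x).
Proof.
move=> [->|Hx]; first by rewrite oppr0; left.
case: (eqVneq x 0) => [->|x0]; first by rewrite oppr0; left.
by right; rewrite vN.
Qed.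

Lemma vge_mul n m x y : vge v n x -> vge v m y -> vge v (n + m) (x * y).
Proof.
move=> [->|Hx]; first by rewrite mul0r; left.
move=> [->|Hy]; first by rewrite mulr0; left.
case: (eqVneq x 0) => [->|x0]; first by rewrite mul0r; left.
case: (eqVneq y 0) => [->|y0]; first by rewrite mulr0; left.
by right; rewrite vM //; apply: lerD.
Qed.

Lemma vge_le n m x : n <= m -> vge v m x -> vge v n x.
Proof. by move=> nm [->|H]; [left | right; apply: le_trans H]. Qed.

Lemma vge_sum n (I : finType) (f : I -> F) : (forall i, vge v n (f i)) -> vge v n (\sum_i f i).
Proof.
move=> H; elim/big_rec: _ => [|i x _ Hx]; first by left.
exact: vge_add.
Qed.

Lemma vge_natmul n x k : vge v n x -> vge v n (x *+ k).
Proof.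
move=> H; elim: k => [|k IH]; first by rewrite mulr0n; left.
by rewrite mulrS; apply: vge_add.
Qed.

Lemma vX c k : c != 0 -> v (c ^+ k) = (k%:Z) * v c.
Proof.
move=> c0; elim: k => [|k IH]; first by rewrite expr0 v1 mul0r.
rewrite exprS vM ?expf_neq0 // IH; lia.
Qed.

Lemma fin_bound (I : finType) (f : I -> F) : exists C, forall i, vge v C (f i).
Proof.
suff : exists C, forall i, i \in enum I -> vge v C (f i).
  by case=> C HC; exists C => i; apply: HC; rewrite mem_enum.
elim: (enum I) => [|a s [C HC]]; first by exists 0.
case: (eqVneq (f a) 0) => [fa0|fa0].
  exists C => i; rewrite in_cons => /orP [/eqP ->|]; [by left | exact: HC].
exists (Num.min C (v (f a))) => i; rewrite in_cons => /orP [/eqP ->|Hi].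
  by right; rewrite ge_min lexx orbT.
by apply: (vge_le (m := C)); [rewrite ge_min lexx | apply: HC].
Qed.

Variable E : falgType F.
Let d := \dim (fullv : {vspace E}).
Let e := vbasis (fullv : {vspace E}).
Definition crd (p : 'I_d) (x : E) : F := coord e p x.
Definition Bnd (x : E) (C : int) := forall p, vge v C (crd p x).

Lemma crd_dec (x : E) : x = \sum_(p < d) crd p x *: e`_p.
Proof. exact: (coord_vbasis (memvf x)). Qed.

Lemma crdD p x y : crd p (x + y) = crd p x + crd p y.
Proof. by rewrite /crd linearD. Qed.
Lemma crdZ p c x : crd p (c *: x) = c * crd p x.
Proof. by rewrite /crd linearZ. Qed.
Lemma crd_sum p (I : finType) (f : I -> E) : crd p (\sum_i f i) = \sum_i crd p (f i).
Proof.
elim/big_rec2: _ => [|i a b _ <-]; last by rewrite crdD.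
by rewrite /crd linear0.
Qed.
Lemma crdMn p x k : crd p (x *+ k) = crd p x *+ k.
Proof. by rewrite /crd linearMn. Qed.

Lemma Bnd_sum C (I : finType) (f : I -> E) : (forall i, Bnd (f i) C) -> Bnd (\sum_i f i) C.
Proof. by move=> H p; rewrite crd_sum; apply: vge_sum => i; apply: H. Qed.

Lemma Bnd_OFspan (s : seq E) : exists C, forall x, OF_span (OF v) s x -> Bnd x C.
Proof.
have [C HC] := fin_bound (fun kp : 'I_(size s) * 'I_d => crd kp.2 s`_(kp.1)).
exists C => x [a [Ha ->]] p; rewrite crd_sum; apply: vge_sum => k.
rewrite crdZ -[C]add0r; apply: vge_mul; first exact: Ha.
exact: (HC (k, p)).
Qed.

Lemma Bnd_mul : exists Cm, forall x y Cx Cy, Bnd x Cx -> Bnd y Cy -> Bnd (x * y) (Cx + Cy + Cm).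
Proof.
have [Cm HC] := fin_bound (fun ijp : 'I_d * 'I_d * 'I_d => crd ijp.2 (e`_(ijp.1.1) * e`_(ijp.1.2))).
exists Cm => x y Cx Cy Hx Hy p.
rewrite (crd_dec x) (crd_dec y) mulr_suml crd_sum; apply: vge_sum => i.
rewrite mulr_sumr crd_sum; apply: vge_sum => j.
rewrite -scalerAl -scalerAr !crdZ mulrA; apply: vge_mul; last exact: (HC (i, j, p)).
by apply: vge_mul.
Qed.

Lemma Bnd_lin (f : E -> E) : (forall x y, f (x + y) = f x + f y) ->
  (forall c x, f (c *: x) = c *: f x) ->
  exists Cf, forall x Cx, Bnd x Cx -> Bnd (f x) (Cx + Cf).
Proof.
move=> fD fZ.
have f0 : f 0 = 0.
  have H := fD 0 0; rewrite addr0 in H.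
  by apply: (@addrI _ (f 0)); rewrite addr0 -H.
have [Cf HC] := fin_bound (fun ip : 'I_d * 'I_d => crd ip.2 (f e`_(ip.1))).
exists Cf => x Cx Hx p.
have -> : f x = \sum_(i < d) crd i x *: f e`_i.
  rewrite {1}(crd_dec x); elim/big_rec2: _ => [|i a b _ <-]; first exact: f0.
  by rewrite fD fZ.
rewrite crd_sum; apply: vge_sum => i; rewrite crdZ; apply: vge_mul => //.
exact: (HC (i, p)).
Qed.

Lemma crd1 : exists p, crd p 1 != 0.
Proof.
apply: NNPP => H.
have : (1 : E) = 0.
  rewrite (crd_dec 1) big1 // => p _.
  have : ~ (crd p 1 != 0) by move=> Hp; apply: H; exists p.
  by move/negP; rewrite negbK => /eqP ->; rewrite scale0r.
by move/eqP; rewrite oner_eq0.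
Qed.

Lemma Bnd_pow (c : F) C : c != 0 -> (forall k, Bnd ((c ^+ k)%:A) C) -> 0 <= v c.
Proof.
move=> c0 H; have [p Hp] := crd1.
rewrite leNgt; apply/negP => vc.
have := H (absz (v (crd p 1%R) - C)%R).+1 p; rewrite crdZ => [[]].
  by move/eqP; rewrite mulf_eq0 expf_eq0 (negbTE c0) (negbTE Hp) andbF.
rewrite vM ?expf_neq0 // vX //.
move: vc; move: (v c) => b; set a := v (crd p 1); move: a => a. nia.
Qed.

End Val.

Lemma algX (F : fieldType) (E : falgType F) (c : F) k : (c ^+ k)%:A = (c%:A : E) ^+ k.
Proof.
elim: k => [|k IH]; first by rewrite !expr0 scale1r.
by rewrite !exprS -IH mulr_algl scalerA.
Qed.

Lemma alg_inv (F : fieldType) (E : falgType F) (c : F) : c != 0 ->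
  (c%:A : E) \is a GRing.unit /\ (c%:A : E)^-1 = (c^-1)%:A.
Proof.
move=> c0.
have H1 : (c%:A : E) * (c^-1)%:A = 1 by rewrite mulr_algl scalerA mulfV // scale1r.
have H2 : ((c^-1)%:A : E) * c%:A = 1 by rewrite mulr_algl scalerA mulVf // scale1r.
have U : (c%:A : E) \is a GRing.unit by apply/unitrP; exists (c^-1)%:A.
by split => //; apply: (mulrI U); rewrite mulrV.
Qed.

Section HCase.
Variables (F : fieldType) (v : F -> int) (E : falgType F) (sigma : E -> E).
Variables (OE : E -> Prop) (w : E) (wF : F).
Hypothesis vM : forall x y, x != 0 -> y != 0 -> v (x * y) = v x + v y.
Hypothesis vD : forall x y, x != 0 -> y != 0 -> x + y != 0 -> Num.min (v x) (v y) <= v (x + y).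
Hypothesis HwF : uniformiserF v wF.
Hypothesis Hdiv : is_division_ring E.
Hypothesis santi : forall x y, sigma (x * y) = sigma y * sigma x.
Hypothesis sadd : forall x y, sigma (x + y) = sigma x + sigma y.
Hypothesis slin : forall (c : F) x, sigma (c *: x) = c *: sigma x.
Hypothesis s1 : sigma 1 = 1.
Hypothesis sinv : forall x, sigma (sigma x) = x.
Hypothesis Htr : forall x, exists t : F, x + sigma x = t%:A.
Hypothesis OE1 : OE 1.
Hypothesis OEsub : forall x y, OE x -> OE y -> OE (x - y).
Hypothesis OEmul : forall x y, OE x -> OE y -> OE (x * y).
Hypothesis OEsc : forall (c : F) x, OF v c -> OE x -> OE (c *: x).
Hypothesis OEfg : exists s : seq E, forall x, OE x <-> OF_span (OF v) s x.
Hypothesis Hunif : uniformiserE OE w.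

Lemma OEXh y k : OE y -> OE (y ^+ k).
Proof. by move=> Hy; elim: k => [|k IH]; rewrite ?expr0 // exprS; apply: OEmul. Qed.

Lemma sX x i : sigma (x ^+ i) = sigma x ^+ i.
Proof.
elim: i => [|i IH]; first by rewrite !expr0.
by rewrite exprSr santi IH exprS.
Qed.

Lemma OEalg c : OF v c -> OE c%:A.
Proof. by move=> Hc; apply: OEsc. Qed.

Lemma sOE x : OE x -> OE (sigma x).
Proof.
move=> Ox; have [t Ht] := Htr x.
have Es : sigma x = t%:A - x by rewrite -Ht addrC addKr.
rewrite Es; apply: OEsub => //; apply: OEalg.
case: (eqVneq t 0) => [->|t0]; first by left.
right.
have [s Hs] := OEfg.
have [C0 HC0] := Bnd_OFspan vM vD (E := E) s.
have [Cs HCs] := Bnd_lin vM vD sadd slin.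
have [Cm HCm] := Bnd_mul vM vD E.
apply: (Bnd_pow (E := E) vM (C := C0 + (C0 + Cs) + Cm)) => // k.
rewrite algX -Ht.
have cxs : GRing.comm x (sigma x).
  rewrite /GRing.comm Es mulrBr mulrBl mulr_algl mulr_algr //.
rewrite exprDn_comm //; apply: (Bnd_sum vD) => i p; rewrite crdMn; apply: (vge_natmul vD).
apply: HCm; first by apply: HC0; apply/Hs; apply: OEXh.
by rewrite -sX; apply: HCs; apply: HC0; apply/Hs; apply: OEXh.
Qed.

Definition OEu x := OE x /\ x \is a GRing.unit /\ OE x^-1.

Lemma sinvE x : x \is a GRing.unit -> sigma x \is a GRing.unit /\ (sigma x)^-1 = sigma (x^-1).
Proof.
move=> U.
have H1 : sigma x * sigma (x^-1) = 1 by rewrite -santi mulVr.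
have H2 : sigma (x^-1) * sigma x = 1 by rewrite -santi mulrV.
have U' : sigma x \is a GRing.unit by apply/unitrP; exists (sigma x^-1).
by split => //; apply: (mulrI U'); rewrite mulrV.
Qed.

Lemma sOEu x : OE_unit OE x -> OE_unit OE (sigma x).
Proof.
move=> [Ox [U Oi]]; have [U' Ei] := sinvE U.
by split; [exact: sOE | split => //; rewrite Ei; exact: sOE].
Qed.

Lemma sNU x : OE x /\ ~ OE_unit OE x -> OE (sigma x) /\ ~ OE_unit OE (sigma x).
Proof.
move=> [Ox Nx]; split; first exact: sOE.
by move/sOEu; rewrite sinv.
Qed.

Lemma w0 : w != 0.
Proof.
apply/negP => /eqP W0.
have [wF0 vwF] := HwF.
have OwF : OE wF%:A by apply: OEalg; right; rewrite vwF.
have [U Ei] := alg_inv E wF0.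
have Uw : OE_unit OE wF%:A.
  apply: NNPP => Nu.
  have [_ [b [_ Eb]]] : (OE wF%:A /\ ~ OE_unit OE wF%:A) /\ _ := conj (conj OwF Nu) ((Hunif.2 _).1 (conj OwF Nu)).
  by move: Eb; rewrite W0 mul0r => /eqP; rewrite scaler_eq0 oner_eq0 orbF (negbTE wF0).
have [_ [_ Oi]] := Uw; rewrite Ei in Oi.
have [s Hs] := OEfg.
have [C0 HC0] := Bnd_OFspan vM vD (E := E) s.
have := Bnd_pow (E := E) vM (c := wF^-1) (C := C0).
have wi0 : wF^-1 != 0 by rewrite invr_eq0.
have H : 0 <= v wF^-1.
  apply: (Bnd_pow (E := E) vM (C := C0)) => // k.
  by apply: HC0; apply/Hs; rewrite algX; apply: OEXh.
have := vM wF0 wi0; rewrite mulfV // (v1 vM) vwF => H2.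
move=> _; lia.
Qed.

Lemma Hw : w \is a GRing.unit.
Proof. exact: Hdiv w0. Qed.

Definition rho := sigma (w^-1).

Lemma rhoU : rho \is a GRing.unit /\ rho^-1 = sigma w.
Proof.
have Uwi : w^-1 \is a GRing.unit by rewrite unitrV; exact: Hw.
have [U'' Ei'] := sinvE Uwi; rewrite invrK in Ei'.
by split; [exact: U'' | rewrite /rho].
Qed.

Lemma Hrho z : sigma (w^-1 * z) = sigma z * rho.
Proof. by rewrite santi. Qed.

Lemma NUw a : OE a -> OE (w * a) /\ ~ OE_unit OE (w * a).
Proof. by move=> Oa; apply/(Hunif.2 _); exists a. Qed.

Lemma KA a : OE a -> exists b, OE b /\ w * a = b * rho^-1.
Proof.
move=> Oa; have [c [Oc Ec]] := (Hunif.2 _).1 (sNU (NUw Oa)).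
exists (sigma c); split; first exact: sOE.
by rewrite rhoU.2 -santi -Ec sinv.
Qed.

Lemma KB b : OE b -> exists a, OE a /\ b * rho^-1 = w * a.
Proof.
move=> Ob; have [c [Oc Ec]] := (Hunif.2 _).1 (sNU (NUw (sOE Ob))).
exists c; split => //.
by rewrite rhoU.2 -Ec santi sinv.
Qed.

End HCase.

Section Quad.
Variables (F : fieldType) (E : falgType F) (sigma : E -> E).
Hypothesis Hdim : \dim {:E} = 2%N.
Hypothesis Hcom : is_commutative E.
Hypothesis Hdiv : is_division_ring E.
Hypothesis Hs : ring_automorphism_over_F sigma.
Hypothesis Hnt : exists x, sigma x != x.

Lemma quad_facts : (forall x, sigma (sigma x) = x) /\ (forall x, exists t : F, x + sigma x = t%:A).
Proof.
have [sadd smul slin s1 _] := Hs.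
have [al Hal] := Hnt.
have sc : forall c : F, sigma c%:A = c%:A by move=> c; rewrite slin s1.
have nal : al \notin <[(1%R : E)]>%VS.
  apply/negP => /vlineP [k Ek]; move: Hal; by rewrite Ek sc eqxx.
have fr : free [:: al; (1%R : E)].
  by rewrite free_cons span_seq1 nal seq1_free oner_neq0.
have spanE : (<<[:: al; (1%R : E)]>> = fullv)%VS.
  apply/eqP; rewrite eqEdim subvf /=.
  by move: fr; rewrite /free => /eqP ->; rewrite Hdim.
have dec : forall z : E, exists a b : F, z = a *: al + b%:A.
  move=> z; have : z \in <<[:: al; (1%R : E)]>>%VS by rewrite spanE memvf.
  rewrite span_cons span_seq1 => /memv_addP [y1 /vlineP [a ->] [y2 /vlineP [b ->] ->]].
  by exists a, b.
have [q0 [p0 Eal2]] := dec (al * al).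
set be := sigma al.
have Ebe2 : be * be = q0 *: be + p0%:A.
  by rewrite /be -smul Eal2 sadd slin sc.
have nd : be - al != 0 by rewrite subr_eq0.
have Ebe : be + al = q0%:A.
  have U := Hdiv nd.
  apply: (mulrI U).
  have -> : (be - al) * (be + al) = be * be - al * al.
    rewrite mulrBl !mulrDr (Hcom al be) opprD addrA.
    by rewrite addrK.
  rewrite Ebe2 Eal2 mulrBl mulr_algr mulr_algr.
  by rewrite opprD addrACA subrr addr0.
have sN : forall x, sigma (- x) = - sigma x.
  move=> x; have H0 : sigma 0 = 0.
    have H := sadd 0 0; rewrite addr0 in H.
    by apply: (@addrI _ (sigma 0)); rewrite addr0 -H.
  by apply/eqP; rewrite -subr_eq0 opprK -sadd addNr H0.
have ssal : sigma be = al.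
  have Eb' : be = q0%:A - al by rewrite -Ebe addrK.
  rewrite Eb' sadd sN sc -/be -Ebe.
  by rewrite [_ - be]addrC addKr.
split.
- move=> z; have [a [b ->]] := dec z.
  by rewrite !sadd !slin ssal !s1.
- move=> z; have [a [b ->]] := dec z.
  exists (a * q0 + b + b).
  by rewrite sadd slin sc -/be addrACA -scalerDr [al + be]addrC Ebe !scalerDl -scalerA addrA.
Qed.
End Quad.

Section Generic.
Variables (F : fieldType) (E : falgType F) (V : lmodType E).
Variables (OE : E -> Prop) (h : V -> V -> E) (sigma : E -> E) (eps : F).
Hypothesis hadd : forall x y z, h (x + y) z = h x z + h y z.
Hypothesis hscal : forall a x y, h (a *: x) y = a * h x y.
Hypothesis hsym : forall x y, h x y = eps%:A * sigma (h y x).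
Hypothesis sadd : forall x y, sigma (x + y) = sigma x + sigma y.

Lemma s0 : sigma 0 = 0.
Proof. have H := sadd 0 0; rewrite addr0 in H. by apply: (@addrI _ (sigma 0)); rewrite addr0 -H. Qed.

Lemma h0l y : h 0 y = 0.
Proof. have H := hadd 0 0 y; rewrite addr0 in H. by apply: (@addrI _ (h 0 y)); rewrite addr0 -H. Qed.

Lemma hNl x y : h (- x) y = - h x y.
Proof. by apply/eqP; rewrite -subr_eq0 opprK -hadd addNr h0l. Qed.

Lemma hBl x z y : h (x - z) y = h x y - h z y.
Proof. by rewrite hadd hNl. Qed.

Lemma hsuml n (f : 'I_n -> V) y : h (\sum_(i < n) f i) y = \sum_(i < n) h (f i) y.
Proof.
elim/big_rec2: _ => [|i a b _ <-]; first exact: h0l.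
by rewrite hadd.
Qed.

Lemma hr0 x : h x 0 = 0.
Proof. by rewrite hsym h0l s0 mulr0. Qed.

Lemma haddr x y z : h x (y + z) = h x y + h x z.
Proof. by rewrite hsym hadd sadd mulrDr -!hsym. Qed.

Lemma hsumr n (f : 'I_n -> V) y : h y (\sum_(i < n) f i) = \sum_(i < n) h y (f i).
Proof.
elim/big_rec2: _ => [|i a b _ <-]; first exact: hr0.
by rewrite haddr.
Qed.

Lemma hsym0 x y : h x y = 0 -> h y x = 0.
Proof. by move=> H; rewrite hsym H s0 mulr0. Qed.

Lemma Fspan_elt (M : V -> Prop) m : M m -> Fspan M m.
Proof.
move=> Mm; exists 1%N, (fun _ => 1), (fun _ => m); split => //.
by rewrite big_ord1 scale1r scale1r.
Qed.

Lemma Fspan0 (M : V -> Prop) : Fspan M 0.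
Proof. by exists 0%N, (fun _ => 0), (fun _ => 0); split; [by case | by rewrite big_ord0]. Qed.

Lemma FspanD (M : V -> Prop) x y : Fspan M x -> Fspan M y -> Fspan M (x + y).
Proof.
move=> [n1 [c1 [m1 [H1 ->]]]] [n2 [c2 [m2 [H2 ->]]]].
exists (n1 + n2)%N, (fun i => match split i with inl a => c1 a | inr b => c2 b end),
  (fun i => match split i with inl a => m1 a | inr b => m2 b end).
split; first by move=> i; case: (split i).
rewrite big_split_ord /=; congr (_ + _); apply: eq_bigr => i _.
  by have -> : split (lshift n2 i) = inl i := unsplitK (inl _ i).
by have -> : split (rshift n1 i) = inr i := unsplitK (inr _ i).
Qed.

Lemma orthF (M1 M2 : V -> Prop) x y :
  (forall x y, M1 x -> M2 y -> h x y = 0) -> Fspan M1 x -> M2 y -> h x y = 0.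
Proof.
move=> Ho [n [c [m [Hm ->]]]] My; rewrite hsuml big1 // => i _.
by rewrite hscal (Ho _ _ (Hm i) My) mulr0.
Qed.

Section Main.
Variables (M : nat -> V -> Prop) (K : nat) (P : V -> Prop) (w : E).
Hypothesis OE0 : OE 0.
Hypothesis OEadd : forall x y, OE x -> OE y -> OE (x + y).
Hypothesis Hnd : nondegenerate_form h.
Hypothesis Hw : w \is a GRing.unit.
Hypothesis HM0 : forall k, (k <= K)%N -> M k 0.
Hypothesis HMw : forall k m n, (k <= K)%N -> M k m -> M k (w ^+ n *: m).
Hypothesis HP : forall x, P x <-> dsum M K x.
Hypothesis Horth : forall k l x y, (k <= K)%N -> (l <= K)%N -> k != l -> M k x -> M l y -> h x y = 0.
Hypothesis Hdual : forall k, (k <= K)%N -> forall u,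
  dual_lattice OE h (M k) u <-> exists m, M k m /\ u = (w ^+ k)^-1 *: m.
Hypothesis Hspan : forall x, Fspan P x.

Lemma M_in_P k m : (k <= K)%N -> M k m -> P m.
Proof.
move=> kK Mm; apply/HP; exists (fun l => if l == k then m else 0); split.
  by move=> l lK; case: eqP => [->|_] //; apply: HM0.
have kK1 : (k < K.+1)%N by [].
rewrite (bigD1 (Ordinal kK1)) //= eqxx big1 ?addr0 // => i /eqP Hi.
case: eqP => // Hik; case: Hi; exact: val_inj.
Qed.

Lemma uniqF (a b : nat -> V) :
  (forall k, (k <= K)%N -> Fspan (M k) (a k)) ->
  (forall k, (k <= K)%N -> Fspan (M k) (b k)) ->
  \sum_(k < K.+1) a k = \sum_(k < K.+1) b k ->
  forall i, (i <= K)%N -> a i = b i.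
Proof.
move=> Ha Hb Hs i iK.
have iK1 : (i < K.+1)%N by [].
have H1 : forall l m, (l <= K)%N -> M l m -> h (a i - b i) m = 0.
  move=> l m lK Mm; case: (eqVneq l i) => [El|Nl].
    subst l.
    have : h (\sum_(k < K.+1) a k - \sum_(k < K.+1) b k) m = 0 by rewrite Hs subrr h0l.
    rewrite hBl !hsuml (bigD1 (Ordinal iK1)) //= [X in _ - X](bigD1 (Ordinal iK1)) //=.
    rewrite big1 ?addr0; last first.
      move=> k /eqP Hk; apply: (orthF (M1 := M k) (M2 := M i)) => //; last by apply: Ha; rewrite -ltnS.
      move=> x y; apply: Horth => //; first by rewrite -ltnS.
      by apply/eqP => E1; apply: Hk; apply: val_inj.
    rewrite big1 ?addr0; first by rewrite hBl.
    move=> k /eqP Hk; apply: (orthF (M1 := M k) (M2 := M i)) => //; last by apply: Hb; rewrite -ltnS.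
    move=> x y; apply: Horth => //; first by rewrite -ltnS.
    by apply/eqP => E1; apply: Hk; apply: val_inj.
  have Ho : forall x y, M i x -> M l y -> h x y = 0.
    by move=> x y; apply: Horth => //; rewrite eq_sym.
  by rewrite hBl (orthF Ho (Ha i iK) Mm) (orthF Ho (Hb i iK) Mm) subrr.
have H2 : forall m, P m -> h m (a i - b i) = 0.
  move=> m /HP [y [Hy ->]]; rewrite hsuml big1 // => k _.
  by apply: hsym0; apply: (H1 k) => //; [rewrite -ltnS | apply: Hy; rewrite -ltnS].
have H3 : forall x, h (a i - b i) x = 0.
  move=> x; apply: hsym0; case: (Hspan x) => n [c [m [Hm ->]]].
  by rewrite hsuml big1 // => l _; rewrite hscal H2 ?mulr0.
by apply/eqP; rewrite -subr_eq0; apply/eqP; apply: Hnd.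
Qed.

Lemma decomp x : Fspan P x -> exists t : nat -> V,
  (forall k, (k <= K)%N -> Fspan (M k) (t k)) /\ x = \sum_(k < K.+1) t k.
Proof.
move=> [n [c [m [Hm ->]]]].
have : forall l : 'I_n, exists Y : nat -> V,
    (forall k, (k <= K)%N -> M k (Y k)) /\ m l = \sum_(k < K.+1) Y k.
  by move=> l; apply/HP.
case/fin_all_exists => Y HY.
exists (fun k => \sum_(l < n) (c l)%:A *: Y l k); split.
  move=> k kK; exists n, c, (fun l => Y l k); split => //.
  by move=> l; case: (HY l) => H _; apply: H.
rewrite (exchange_big) /=; apply: eq_bigr => l _.
by case: (HY l) => _ ->; rewrite scaler_sumr.
Qed.

Lemma FspanMw k t n : (k <= K)%N -> Fspan (M k) t -> Fspan (M k) (w ^+ n *: t).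
Proof.
move=> kK [n' [c [m [Hm ->]]]]; exists n', c, (fun l => w ^+ n *: m l); split.
  by move=> l; apply: HMw.
rewrite scaler_sumr; apply: eq_bigr => l _.
by rewrite !scalerA mulr_algl mulr_algr.
Qed.

Theorem generic_main i j : (i <= j)%N -> (j <= K)%N ->
  forall g, is_isometry h g -> stabilises g P ->
  forall x, M j x ->
  forall y : nat -> V, (forall k, (k <= K)%N -> Fspan (M k) (y k)) ->
  g x = \sum_(k < K.+1) y k ->
  exists m, M i m /\ y i = w ^+ (j - i) *: m.
Proof.
move=> ij jK g [gadd gZ gbij giso] gst x Mx y Hy Hgx.
have iK : (i <= K)%N by apply: leq_trans jK.
have g0 : g 0 = 0.
  have H := gadd 0 0; rewrite addr0 in H. by apply: (@addrI _ (g 0)); rewrite addr0 -H.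
have gsum : forall n (f : 'I_n -> V), g (\sum_(l < n) f l) = \sum_(l < n) g (f l).
  by move=> n f; elim/big_rec2: _ => [|l a b _ <-]; rewrite ?g0 ?gadd.
have wjU : w ^+ j \is a GRing.unit by rewrite unitrX.
set w0 := (w ^+ j)^-1 *: x.
have Dw0 : dual_lattice OE h (M j) w0 by apply/Hdual => //; exists x.
have xE : x = w ^+ j *: w0 by rewrite /w0 scalerA mulrV // scale1r.
have [Fw0 Ow0] := Dw0.
have Pgw0 : Fspan P (g w0).
  case: Fw0 => n [c [m [Hm ->]]].
  exists n, c, (fun l => g (m l)); split.
    by move=> l; apply/gst; exists (m l); split => //; apply: (M_in_P jK).
  by rewrite gsum; apply: eq_bigr => l _; rewrite gZ.
have [t [Ht Hgw0]] := decomp Pgw0.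
have Hyt : y i = w ^+ j *: t i.
  apply: (uniqF (b := fun k => w ^+ j *: t k)) => //.
    by move=> k kK; apply: FspanMw => //; apply: Ht.
  by rewrite -Hgx xE gZ Hgw0 scaler_sumr.
have iK1 : (i < K.+1)%N by [].
have Dti : dual_lattice OE h (M i) (t i).
  split; first exact: Ht.
  move=> m Mm.
  have -> : h (t i) m = h (g w0) m.
    rewrite Hgw0 hsuml (bigD1 (Ordinal iK1)) //= big1 ?addr0 // => k /eqP Hk.
    apply: (orthF (M1 := M k) (M2 := M i)) => //; last by apply: Ht; rewrite -ltnS.
    move=> a b; apply: Horth => //; first by rewrite -ltnS.
    by apply/eqP => E1; apply: Hk; apply: val_inj.
  have [m' [Pm' ->]] : exists m', P m' /\ m = g m'.
    by apply/gst; apply: (M_in_P iK).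
  rewrite giso; case/HP: Pm' => y' [Hy' ->]; rewrite hsumr.
  elim/big_ind: _ => //; move=> k _.
  case: (eqVneq (k : nat) j) => [Ek|Nk].
    by apply: Ow0; rewrite -Ek; apply: Hy'; rewrite -ltnS.
  rewrite (orthF (M1 := M j) (M2 := M k)) //; last by apply: Hy'; rewrite -ltnS.
  by move=> a b; apply: Horth => //; [rewrite -ltnS | rewrite eq_sym].
case/(Hdual iK): Dti => m [Mm Htm].
exists m; split => //.
rewrite Hyt Htm scalerA -(subnK ij) exprD -mulrA mulrV ?unitrX // mulr1.
by rewrite subnK.
Qed.

End Main.

Lemma FspanS (M : V -> Prop) (e : E) t :
  (forall m, M m -> Fspan M (e *: m)) -> Fspan M t -> Fspan M (e *: t).
Proof.
move=> He [n [c [m [Hm ->]]]]; rewrite scaler_sumr.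
elim/big_rec: _ => [|l x _ Hx]; first exact: Fspan0.
apply: FspanD => //.
have [n' [c' [m' [Hm' Hem]]]] := He _ (Hm l).
exists n', (fun k => c l * c' k), m'; split => //.
rewrite scalerA mulr_algr -mulr_algl -scalerA Hem scaler_sumr.
apply: eq_bigr => k _; by rewrite scalerA mulr_algl scalerA.
Qed.

Lemma Fspan_mono (M1 M2 : V -> Prop) t :
  (forall m, M1 m -> M2 m) -> Fspan M1 t -> Fspan M2 t.
Proof. by move=> H [n [c [m [Hm ->]]]]; exists n, c, m; split => // l; apply: H. Qed.

Section Inst.
Variables (w rho : E) (L : V -> Prop) (Ls : nat -> V -> Prop) (n : nat).
Hypothesis OE1 : OE 1.
Hypothesis OEsub : forall x y, OE x -> OE y -> OE (x - y).
Hypothesis OEmul : forall x y, OE x -> OE y -> OE (x * y).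
Hypothesis OEw : OE w.
Hypothesis Hw : w \is a GRing.unit.
Hypothesis Hrho : forall z, sigma (w^-1 * z) = sigma z * rho.
Hypothesis Hrho1 : rho \is a GRing.unit.
Hypothesis KA : forall a, OE a -> exists b, OE b /\ w * a = b * rho^-1.
Hypothesis KB : forall b, OE b -> exists a, OE a /\ b * rho^-1 = w * a.
Hypothesis Hnd : nondegenerate_form h.
Hypothesis Hfull : full_lattice OE L.
Hypothesis HJ : jordan_splitting OE w h L Ls n.+2.

Lemma OE0 : OE 0.
Proof. by rewrite -(subrr 1); apply: OEsub. Qed.
Lemma OEopp x : OE x -> OE (- x).
Proof. by move=> Hx; rewrite -sub0r; apply: OEsub => //; apply: OE0. Qed.
Lemma OEadd x y : OE x -> OE y -> OE (x + y).
Proof. by move=> Hx Hy; rewrite -[y]opprK; apply: OEsub => //; apply: OEopp. Qed.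
Lemma OEX k : OE (w ^+ k).
Proof. by elim: k => [|k IH]; rewrite ?expr0 // exprS; apply: OEmul. Qed.

Lemma submod_sum (M : V -> Prop) k (b : 'I_k -> E) (m : 'I_k -> V) :
  OE_submodule OE M -> (forall l, OE (b l)) -> (forall l, M (m l)) ->
  M (\sum_(l < k) b l *: m l).
Proof.
move=> [M0 MD MZ] Hb Hm; elim/big_rec: _ => // l x _ Hx.
by apply: MD => //; apply: MZ.
Qed.

Lemma conv_ideal (M : V -> Prop) (k : nat) (z : int) u :
  z = - (k%:Z) -> OE_submodule OE M ->
  ideal_mul (pE_pow OE w z) M u <-> exists m, M m /\ u = (w ^+ k)^-1 *: m.
Proof.
move=> -> HM; split.
  move=> [k' [a [m [Ha Hm ->]]]].
  have [b Hb] := fin_all_exists Ha.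
  exists (\sum_(l < k') b l *: m l); split.
    by apply: submod_sum => // l; case: (Hb l).
  rewrite scaler_sumr; apply: eq_bigr => l _.
  by case: (Hb l) => _ ->; rewrite scalerA exprnN.
move=> [m [Mm ->]]; exists 1%N, (fun _ => (w ^+ k)^-1), (fun _ => m); split => //.
  by move=> _; exists 1; split => //; rewrite mulr1 exprnN.
by rewrite big_ord1.
Qed.

Lemma HJsub k : (k <= n.+2)%N -> OE_submodule OE (Ls k).
Proof. by case: HJ => H _ _ _ _; apply: H. Qed.

Lemma HJdual k : (k <= n.+2)%N -> forall u,
  dual_lattice OE h (Ls k) u <-> exists m, Ls k m /\ u = (w ^+ k)^-1 *: m.
Proof.
move=> kK u; case: HJ => _ _ _ _ H; apply: iff_trans (H k kK u) _.
exact: conv_ideal (HJsub kK).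
Qed.

Lemma HJorth k l x y : (k <= n.+2)%N -> (l <= n.+2)%N -> k != l -> Ls k x -> Ls l y -> h x y = 0.
Proof. by case: HJ => _ _ _ H _; apply: H. Qed.

Lemma HJP x : L x <-> dsum Ls n.+2 x.
Proof. by case: HJ => _ H _ _ _; apply: H. Qed.

Lemma HJw k m e : (k <= n.+2)%N -> Ls k m -> Ls k (w ^+ e *: m).
Proof. by move=> kK Mm; case: (HJsub kK) => _ _ HZ; apply: HZ => //; apply: OEX. Qed.

Theorem partL i j : (i <= j)%N -> (j <= n.+2)%N ->
     forall g, is_isometry h g -> stabilises g L ->
     forall x, Ls j x ->
     forall y : nat -> V, (forall k, (k <= n.+2)%N -> Fspan (Ls k) (y k)) ->
       g x = \sum_(k < n.+3) y k ->
       ideal_mul (pE_pow OE w (Posz (j - i)%N)) (Ls i) (y i).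
Proof.
move=> ij jK g Hg Hst x Hx y Hy Hgx.
have [m [Mm ->]] := generic_main OE0 OEadd Hnd Hw
  (fun k kK => let: And3 M0 _ _ := HJsub kK in M0) HJw HJP HJorth HJdual
  (let: And3 _ _ H := Hfull in H) ij jK Hg Hst Hx Hy Hgx.
exists 1%N, (fun _ => w ^+ (j - i)), (fun _ => m); split => //.
  by move=> _; exists 1; split => //; rewrite mulr1.
by rewrite big_ord1.
Qed.

Let Lps := Lprime_parts OE w Ls n.+2.

Lemma subn2 : (n.+2 - 2 = n)%N.
Proof. by rewrite !subSS subn0. Qed.

Lemma Lps_ne k : k != n -> Lps k = Ls k.
Proof. by move=> Hk; rewrite /Lps /Lprime_parts subn2 (negbTE Hk). Qed.

Lemma Lps_n x : Lps n x <-> exists a b, [/\ Ls n a, Ls n.+2 b & x = a + w^-1 *: b].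
Proof.
rewrite /Lps /Lprime_parts subn2 eqxx; split.
  move=> [a [b' [Ha Hb' ->]]].
  have [b [Hb ->]] := (@conv_ideal (Ls n.+2) 1 (-1) _ (erefl _) (HJsub (leqnn _))).1 Hb'.
  by exists a, b; rewrite expr1.
move=> [a [b [Ha Hb ->]]]; exists a, (w^-1 *: b); split => //.
by apply/(@conv_ideal (Ls n.+2) 1 (-1) _ (erefl _) (HJsub (leqnn _))); exists b; rewrite expr1.
Qed.

Lemma wi_inv : w^-1 * w = 1. Proof. exact: mulVr. Qed.

Lemma Lps0 k : (k <= n.+1)%N -> Lps k 0.
Proof.
move=> kK; case: (eqVneq k n) => [->|Hk].
  apply/Lps_n; exists 0, 0; rewrite scaler0 addr0; split => //.
    by case: (HJsub (leqW (leqnSn n))) => [].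
  by case: (HJsub (leqnn n.+2)) => [].
rewrite Lps_ne //; by case: (HJsub (leqW kK)) => [].
Qed.

Lemma Lpsw k m e : (k <= n.+1)%N -> Lps k m -> Lps k (w ^+ e *: m).
Proof.
move=> kK; case: (eqVneq k n) => [->|Hk]; last first.
  by rewrite Lps_ne //; apply: HJw; apply: leqW.
move=> /Lps_n [a [b [Ha Hb ->]]]; apply/Lps_n.
exists (w ^+ e *: a), (w ^+ e *: b); split.
- by apply: HJw => //; apply: leqW; apply: leqW.
- exact: HJw.
rewrite scalerDr !scalerA; congr (_ + _ *: _).
exact: commrV (commr_sym (commrX e (commr_refl w))).
Qed.

Lemma Lps_orth k l x y : (k <= n.+1)%N -> (l <= n.+1)%N -> k != l -> Lps k x -> Lps l y -> h x y = 0.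
Proof.
have key : forall l x y, (l <= n.+1)%N -> n != l -> Lps n x -> Ls l y -> h x y = 0.
  move=> l' x' y' lK Hl /Lps_n [a [b [Ha Hb ->]]] Hy.
  have nN : (n <= n.+2)%N := leqW (leqW (leqnn n)).
  have lN : (l' <= n.+2)%N := leqW lK.
  have h1 : h a y' = 0 := HJorth nN lN Hl Ha Hy.
  have Hl2 : n.+2 != l' by apply/eqP => E1; move: lK; rewrite -E1 ltnn.
  have h2 : h b y' = 0 := HJorth (leqnn _) lN Hl2 Hb Hy.
  by rewrite hadd hscal h1 h2 mulr0 addr0.
move=> kK lK Hkl; case: (eqVneq k n) => [Ek|Nk]; case: (eqVneq l n) => [El|Nl].
- by move: Hkl; rewrite Ek El eqxx.
- by rewrite Ek (Lps_ne Nl) => Hx Hy; apply: (key l) => //; rewrite eq_sym.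
- rewrite El (Lps_ne Nk) => Hx Hy; apply: hsym0; apply: (key k) => //.
  by rewrite eq_sym.
- rewrite (Lps_ne Nk) (Lps_ne Nl); apply: HJorth => //; exact: leqW.
Qed.

Lemma L_in_Lp x : L x -> dsum Lps n.+1 x.
Proof.
move=> /HJP [y [Hy ->]].
exists (fun k => y k + (if k == n then y n.+2 else 0)); split.
  move=> k kK; case: (eqVneq k n) => [->|Hk].
    apply/Lps_n; exists (y n), (w *: y n.+2); split.
    - by apply: Hy; apply: leqW; apply: leqW.
    - by rewrite -[w]expr1; apply: HJw => //; apply: Hy.
    - by rewrite scalerA mulVr // scale1r.
  by rewrite Lps_ne // addr0; apply: Hy; apply: leqW.
rewrite big_split /= big_ord_recr /=; congr (_ + _).
have nK : (n < n.+2)%N by apply: leqW.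
rewrite (bigD1 (Ordinal nK)) //= eqxx big1 ?addr0 // => i /eqP Hi.
rewrite ifN //; apply/eqP => E1; apply: Hi; exact: val_inj.
Qed.

Lemma hrs x y : h x (w^-1 *: y) = h x y * rho.
Proof. by rewrite hsym hscal Hrho mulrA -hsym. Qed.

Lemma winv : (w ^+ n)^-1 * w^-1 = w * (w ^+ n.+2)^-1.
Proof.
rewrite -invrM ?unitrX // -exprS [w ^+ n.+2]exprSr invrM ?unitrX //.
by rewrite mulrA mulrV // mul1r.
Qed.

Lemma FspanNinv e b : (e <= n.+2)%N -> Ls n.+2 b -> Fspan (Ls n.+2) ((w ^+ e)^-1 *: b).
Proof.
move=> eN Hb.
have [F1 _] : dual_lattice OE h (Ls n.+2) ((w ^+ n.+2)^-1 *: b).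
  by apply/(HJdual (leqnn _)); exists b.
have -> : (w ^+ e)^-1 *: b = w ^+ (n.+2 - e) *: ((w ^+ n.+2)^-1 *: b).
  rewrite scalerA; congr (_ *: _).
  have -> : w ^+ n.+2 = w ^+ e * w ^+ (n.+2 - e) by rewrite -exprD subnKC.
  by rewrite invrM ?unitrX // mulrA mulrV ?unitrX // mul1r.
apply: FspanS => // m Hm; apply: Fspan_elt; exact: HJw.
Qed.

Lemma Lps_dual_n u : dual_lattice OE h (Lps n) u <-> exists m, Lps n m /\ u = (w ^+ n)^-1 *: m.
Proof.
have nN : (n <= n.+2)%N by apply: leqW; apply: leqW.
have LsN_Lps : forall b, Ls n.+2 b -> Lps n b.
  move=> b Hb; apply/Lps_n; exists 0, (w *: b); split.
  - by case: (HJsub nN).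
  - by rewrite -[w]expr1; apply: HJw.
  - by rewrite add0r scalerA mulVr // scale1r.
have Lsn_Lps : forall a, Ls n a -> Lps n a.
  move=> a Ha; apply/Lps_n; exists a, 0; split => //.
  - by case: (HJsub (leqnn _)).
  - by rewrite scaler0 addr0.
have orthnN : forall x y, Ls n x -> Ls n.+2 y -> h x y = 0.
  by move=> x y; apply: HJorth => //; apply/eqP; lia.
have orthNn : forall x y, Ls n.+2 x -> Ls n y -> h x y = 0.
  by move=> x y; apply: HJorth => //; apply/eqP; lia.
split.
- move=> [Fu Ou].
  case: Fu => k [c [m [Hm Eu]]].
  have [ab Hab] := fin_all_exists (fun l => (Lps_n (m l)).1 (Hm l)).
  have [bb Hbb] := fin_all_exists Hab.
  set u1 := \sum_(l < k) (c l)%:A *: ab l.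
  set u2'' := \sum_(l < k) (c l)%:A *: bb l.
  have Eu12 : u = u1 + w^-1 *: u2''.
    rewrite Eu /u1 /u2'' scaler_sumr -big_split; apply: eq_bigr => l _.
    case: (Hbb l) => _ _ ->; rewrite scalerDr; congr (_ + _).
    by rewrite !scalerA mulr_algl mulr_algr.
  have Fu1 : Fspan (Ls n) u1.
    by exists k, c, ab; split => // l; case: (Hbb l).
  have Fu2'' : Fspan (Ls n.+2) u2''.
    by exists k, c, bb; split => // l; case: (Hbb l).
  have FwiN : forall t, Fspan (Ls n.+2) t -> Fspan (Ls n.+2) (w^-1 *: t).
    move=> t Ht; apply: FspanS => // b Hb.
    by have := FspanNinv (isT : (1 <= n.+2)%N) Hb; rewrite expr1.
  have Du1 : dual_lattice OE h (Ls n) u1.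
    split => // a2 Ha2.
    have -> : h u1 a2 = h u a2.
      rewrite Eu12 hadd hscal (orthF orthNn Fu2'' Ha2) mulr0 addr0 //.
    exact: Ou (Lsn_Lps _ Ha2).
  have [a [Ha Eu1]] := (HJdual nN u1).1 Du1.
  set u2' := w^-1 *: (w^-1 *: u2'').
  have Du2 : dual_lattice OE h (Ls n.+2) u2'.
    split; first exact: (FwiN _ (FwiN _ Fu2'')).
    move=> b2 Hb2.
    have Hm2 : Lps n (w^-1 *: b2).
      apply/Lps_n; exists 0, b2; split; [by case: (HJsub nN) | exact: Hb2 | by rewrite add0r].
    have := Ou _ Hm2.
    rewrite Eu12 hadd !hrs (orthF orthnN Fu1 Hb2) mul0r add0r.
    move=> Oc; have [d [Od Ed]] := KB Oc.
    have E2 : h (w^-1 *: u2'') b2 = w * d by rewrite -Ed mulrK.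
    by rewrite /u2' hscal E2 mulKr.
  have [b [Hb Eu2]] := (HJdual (leqnn _) u2').1 Du2.
  exists (a + w^-1 *: b); split; first by apply/Lps_n; exists a, b.
  rewrite Eu12 Eu1 scalerDr scalerA winv -scalerA -Eu2; congr (_ + _).
  by rewrite /u2' (scalerA w) mulrV // scale1r.
- move=> [m [/Lps_n [a [b [Ha Hb ->]]] ->]].
  have [Fa Oa] : dual_lattice OE h (Ls n) ((w ^+ n)^-1 *: a).
    by apply/(HJdual nN); exists a.
  have [Fb Ob] : dual_lattice OE h (Ls n.+2) ((w ^+ n.+2)^-1 *: b).
    by apply/(HJdual (leqnn _)); exists b.
  have Eu : (w ^+ n)^-1 *: (a + w^-1 *: b) =
            (w ^+ n)^-1 *: a + w *: ((w ^+ n.+2)^-1 *: b).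
    by rewrite scalerDr !scalerA winv.
  rewrite Eu; split.
    apply: FspanD; first exact: Fspan_mono Fa.
    apply: (Fspan_mono LsN_Lps); apply: FspanS => // b' Hb'.
    by apply: Fspan_elt; rewrite -[w]expr1; apply: HJw.
  move=> m' /Lps_n [a2 [b2 [Ha2 Hb2 ->]]].
  rewrite !haddr !hadd !hrs !hscal (orthnN _ _ Ha Hb2) (orthNn _ _ Hb Ha2).
  rewrite !(mul0r, mulr0, addr0, add0r).
  have Ob2 := Ob _ Hb2; rewrite hscal in Ob2.
  have Oa2 := Oa _ Ha2; rewrite hscal in Oa2.
  have [d [Od Ed]] := KA Ob2.
  by rewrite Ed (divrK Hrho1); apply: OEadd.
Qed.

Lemma Lps_dual k : (k <= n.+1)%N -> forall u,
  dual_lattice OE h (Lps k) u <-> exists m, Lps k m /\ u = (w ^+ k)^-1 *: m.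
Proof.
move=> kK u; case: (eqVneq k n) => [->|Hk]; first exact: Lps_dual_n.
rewrite Lps_ne //; apply: HJdual; exact: leqW.
Qed.

Theorem partLp i j : (i <= j)%N -> (j <= n.+2.-1)%N ->
     forall g, is_isometry h g -> stabilises g (dsum Lps n.+2.-1) ->
     forall x, Lps j x ->
     forall y : nat -> V, (forall k, (k <= n.+2.-1)%N -> Fspan (Lps k) (y k)) ->
       g x = \sum_(k < n.+2.-1.+1) y k ->
       ideal_mul (pE_pow OE w (Posz (j - i)%N)) (Lps i) (y i).
Proof.
move=> ij jK g Hg Hst x Hx y Hy Hgx.
have HspanP : forall x, Fspan (dsum Lps n.+1) x.
  move=> z; apply: (Fspan_mono L_in_Lp).
  by case: Hfull => _ _ H; apply: H.
have [m [Mm ->]] := generic_main (P := dsum Lps n.+1) OE0 OEadd Hnd Hw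
  Lps0 Lpsw (fun x => iff_refl _) Lps_orth Lps_dual HspanP ij jK Hg Hst Hx Hy Hgx.
exists 1%N, (fun _ => w ^+ (j - i)), (fun _ => m); split => //.
  by move=> _; exists 1; split => //; rewrite mulr1.
by rewrite big_ord1.
Qed.

End Inst.

End Generic.

Lemma sigma_basic (F : fieldType) (E : falgType F) (c : Ecase) (sigma : E -> E) :
  admissible c sigma ->
  (forall x y, sigma (x + y) = sigma x + sigma y) /\ (forall (a : F) x, sigma (a *: x) = a *: sigma x).
Proof.
case: c => /=.
- by move=> [_ H]; split => *; rewrite !H.
- by move=> [_ _ _ [H1 _ H3 _ _] _].
- move=> [_ [phi [bij padd pmul palg pswap]]].
  have inj := bij_inj bij.
  split.
    move=> x y; apply: inj; rewrite padd !pswap padd.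
    by case: (phi x) => a b; case: (phi y) => a' b'.
  move=> a x; apply: inj; rewrite -mulr_algl pswap pmul palg -mulr_algl pmul palg pswap.
  by case: (phi x).
- by move=> [_ _ _ [[H1 _ H3 _ _] _]].
Qed.

Unset Implicit Arguments.
Set Strict Implicit.

Theorem lemma3p8
  (F : fieldType) (v : F -> int) (wF : F) (p : nat)
  (E : falgType F) (c : Ecase) (sigma : E -> E) (eps : F)
  (OE : E -> Prop) (wE : E)
  (V : lmodType E) (h : V -> V -> E)
  (L : V -> Prop) (Ls : nat -> V -> Prop) (N : nat) :
  nonarch_local_field v -> uniformiserF v wF -> residue_char v p ->
  admissible c sigma -> (eps = 1 \/ eps = -1) ->
  is_maximal_order (OF v) OE ->
  ((c = CaseQuadField /\ ramified OE wF) \/ c = CaseQuaternion -> uniformiserE OE wE) ->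
  (~ ((c = CaseQuadField /\ ramified OE wF) \/ c = CaseQuaternion) -> wE = wF%:A) ->
  ((c = CaseQuadField /\ ramified OE wF) -> p <> 2%N) ->
  ((c = CaseF /\ eps = 1) -> p <> 2%N) ->
  full_lattice OE L -> sigma_eps_hermitian sigma eps h ->
  (forall x y, L x -> L y -> OE (h x y)) -> nondegenerate_form h ->
  jordan_splitting OE wE h L Ls N -> (2 <= N)%N ->
  let Lps := Lprime_parts OE wE Ls N in
  let Lp := dsum Lps N.-1 in
  (forall i j, (i <= j)%N -> (j <= N)%N ->
     forall g, is_isometry h g -> stabilises g L ->
     forall x, Ls j x ->
     forall y : nat -> V, (forall k, (k <= N)%N -> Fspan (Ls k) (y k)) ->
       g x = \sum_(k < N.+1) y k ->
       ideal_mul (pE_pow OE wE (Posz (j - i)%N)) (Ls i) (y i)) /\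
  (forall i j, (i <= j)%N -> (j <= N.-1)%N ->
     forall g, is_isometry h g -> stabilises g Lp ->
     forall x, Lps j x ->
     forall y : nat -> V, (forall k, (k <= N.-1)%N -> Fspan (Lps k) (y k)) ->
       g x = \sum_(k < N.-1.+1) y k ->
       ideal_mul (pE_pow OE wE (Posz (j - i)%N)) (Lps i) (y i)).
Proof.
move=> Hloc HwF _ Hadm _ Hmax Hun1 Hun2 _ _ Hfull Hherm _ Hnd HJ HN.
case: N HJ HN => [|[|n]] HJ HN //.
move=> Lps Lp.
have [[vM vD _] _ _] := Hloc.
have [[OE1 Hsm Hsc Hfg _] _] := Hmax.
have OEsub : forall x y, OE x -> OE y -> OE (x - y) by move=> x y Ox Oy; case: (Hsm x y Ox Oy).
have OEmul : forall x y, OE x -> OE y -> OE (x * y) by move=> x y Ox Oy; case: (Hsm x y Ox Oy).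
have [sadd slin] := sigma_basic Hadm.
have [hadd hscal hsym] := Hherm.
have [wF0 vwF] := HwF.
have OFwF : OF v wF by right; rewrite vwF.
have K : exists rho, [/\ OE wE, (wE \is a GRing.unit), (forall z, sigma (wE^-1 * z) = sigma z * rho),
    (rho \is a GRing.unit) & (forall a, OE a -> exists b, OE b /\ wE * a = b * rho^-1) /\
    (forall b, OE b -> exists a, OE a /\ b * rho^-1 = wE * a)].
  case: (classic ((c = CaseQuadField /\ ramified OE wF) \/ c = CaseQuaternion)) => HH.
  - have Hunif := Hun1 HH.
    have [Hdiv santi s1 sinv Htr] : [/\ is_division_ring E,
        (forall x y, sigma (x * y) = sigma y * sigma x), sigma 1 = 1,
        (forall x, sigma (sigma x) = x) & (forall x, exists t : F, x + sigma x = t%:A)].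
      case: HH => [[Ec _]|Ec]; move: Hadm; rewrite Ec /=.
      + move=> [Hdim Hcom Hdiv Hs Hnt]; have [sinv Htr] := quad_facts Hdim Hcom Hdiv Hs Hnt.
        have [_ smul _ s1 _] := Hs.
        by split => // x y; rewrite smul Hcom.
      + move=> [_ Hdiv _ [[_ santi _ s1 sinv] Hst]]; split => // x.
        have [c0 E0] := Hst x; have [c1 E1] := Hst (x + 1).
        exists (c1 - c0 - 1); move: E1; rewrite sadd s1 mulrDl !mulrDr E0 mulr1 mul1r.
        move=> E1; rewrite !scalerBl -E1 scale1r.
        by rewrite mulr1 [c0%:A + x]addrC addrAC addrA addrK addrAC addrK.
    have Hw := Hw vM vD HwF Hdiv OE1 OEmul Hsc Hfg Hunif.
    exists (rho sigma wE); split.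
    + by case: Hunif.
    + exact: Hw.
    + exact: Hrho wE santi.
    + exact: (rhoU vM vD HwF Hdiv santi s1 OE1 OEmul Hsc Hfg Hunif).1.
    + split; first exact: KA vM vD HwF Hdiv santi sadd slin s1 sinv Htr OE1 OEsub OEmul Hsc Hfg Hunif.
      exact: KB vM vD HwF Hdiv santi sadd slin s1 sinv Htr OE1 OEsub OEmul Hsc Hfg Hunif.
  - have Ew := Hun2 HH; rewrite Ew.
    have [Uw Ewi] := alg_inv E wF0.
    have wi0 : wF^-1 != 0 by rewrite invr_eq0.
    have [Uwi Ewii] := alg_inv E wi0.
    exists ((wF^-1)%:A); split => //.
    + by apply: Hsc => //.
    + by move=> z; rewrite Ewi mulr_algl slin mulr_algr.
    + split; move=> a Oa; exists a; split => //;
      by rewrite Ewii invrK mulr_algl mulr_algr.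
have [rho [OEw Hw Hrho Hrho1 [KA KB]]] := K.
split.
- exact: (partL hadd hscal hsym sadd OE1 OEsub OEmul OEw Hw Hnd Hfull HJ).
- exact: (partLp hadd hscal hsym sadd OE1 OEsub OEmul OEw Hw Hrho Hrho1 KA KB Hnd Hfull HJ).
Qed.
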